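(* Let $m>n$ be positive integers and let $G[V_1,V_2]$ be a balanced bipartite graph on $2(m+n-1)$ vertices (so $|V_1|=|V_2|=m+n-1$) with minimum degree $\delta(G)>\frac{3}{4}(m+n-1)$. Then for every red-blue coloring of the edges of $G$, either there is a connected component $C$ of the red subgraph with $|V(C)\cap V_1|\ge m$ and $|V(C)\cap V_2|\ge m$, or there is a connected component $C$ of the blue subgraph with $|V(C)\cap V_1|\ge n$ and $|V(C)\cap V_2|\ge n$.
   Context: For a red-blue edge coloring of $G$, the red subgraph (resp. blue subgraph) is the spanning subgraph of $G$ consisting of all red (resp. blue) edges; a red (blue) component is a connected component of this spanning subgraph. *)

(* Defs.v *)
From mathcomp Require Import all_boot.
Set Implicit Arguments. Unset Strict Implicit. Unset Printing Implicit Defensive.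

Definition simple_graph (T : finType) (e : rel T) : Prop :=
  symmetric e /\ irreflexive e.

Definition bipartite_with (T : finType) (e : rel T) (V1 V2 : {set T}) : Prop :=
  [disjoint V1 & V2] /\ V1 :|: V2 = [set: T] /\
  (forall x y, e x y -> (x \in V1) = (y \in V2)).

Definition deg (T : finType) (e : rel T) (v : T) : nat := #|[set u | e v u]|.

(* A red-blue edge coloring: a symmetric map on pairs; true = red, false = blue.
   Only its values on edges matter. *)
Definition edge_coloring (T : finType) (c : T -> T -> bool) : Prop := symmetric c.

Definition red_sub (T : finType) (e : rel T) (c : T -> T -> bool) : rel T :=
  fun x y => e x y && c x y.
Definition blue_sub (T : finType) (e : rel T) (c : T -> T -> bool) : rel T :=
  fun x y => e x y && ~~ c x y.

Definition component (T : finType) (r : rel T) (x : T) : {set T} :=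
  [set y | connect r x y].

Definition has_big_component (T : finType) (r : rel T) (V1 V2 : {set T}) (k : nat) : Prop :=
  exists x : T, k <= #|component r x :&: V1| /\ k <= #|component r x :&: V2|.

(* Main.v *)
Require Import Defs.
From mathcomp Require Import all_boot.
From mathcomp Require Import zify.
From Stdlib Require Import Classical.
Set Implicit Arguments. Unset Strict Implicit. Unset Printing Implicit Defensive.

Notation nb e u := [set z | e u z].

Record setting (T : finType) (e : rel T) (V1 V2 : {set T}) (N : nat) : Prop := Setting {
  s_sym : symmetric e;
  s_bip : forall x y, e x y -> (x \in V1) = (y \in V2);
  s_V1 : #|V1| = N; s_V2 : #|V2| = N;
  s_deg : forall v, 3 * N < 4 * deg e v }.

Lemma setting_swap T e V1 V2 N : @setting T e V1 V2 N -> setting e V2 V1 N.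
Proof.
case=> sy bp h1 h2 hd; split=> //.
move=> x y exy; rewrite (bp y x) //; by rewrite sy.
Qed.

Lemma L_nbr T e V1 V2 N u (S : {set T}) : setting e V1 V2 N -> u \in V1 -> S \subset V2 ->
  4 * #|S| + 1 <= 4 * #|S :&: nb e u| + N.
Proof.
move=> hs uV SV.
have hd := s_deg hs u; rewrite /deg in hd.
have nbV : nb e u \subset V2.
  by apply/subsetP => z; rewrite inE => euz; rewrite -(s_bip hs euz).
have h1 : #|nb e u| <= #|S :&: nb e u| + #|V2 :\: S|.
  rewrite -(cardsID S (nb e u)) setIC leq_add2l.
  by apply: subset_leq_card; apply: setSD.
have h2 : #|V2 :\: S| + #|S| = N.
  rewrite cardsD (setIidPr SV) -(s_V2 hs).
  have := subset_leq_card SV; lia.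
lia.
Qed.

Lemma L_common T e V1 V2 N u u' (S : {set T}) : setting e V1 V2 N -> u \in V1 -> u' \in V1 ->
  S \subset V2 -> N <= 2 * #|S| -> exists2 z, z \in S & e u z && e u' z.
Proof.
move=> hs uV u'V SV hS.
have h1 := L_nbr hs uV SV; have h2 := L_nbr hs u'V SV.
case: (set_0Vmem ((S :&: nb e u) :&: (S :&: nb e u'))) => [I0 | [z]]; last first.
  by rewrite !inE => /andP[/andP[zS euz] /andP[_ eu'z]]; exists z; rewrite ?euz.
have : #|(S :&: nb e u) :|: (S :&: nb e u')| <= #|S|.
  by apply: subset_leq_card; rewrite subUset !subsetIl.
rewrite cardsU I0 cards0 subn0; lia.
Qed.

Lemma cross_edge (T : finType) (e X Y : rel T) x p q : (forall a b, e a b -> X a b || Y a b) ->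
  connect X x p -> ~~ connect X x q -> e p q -> Y p q.
Proof.
move=> cov cxp ncxq epq; case/orP: (cov _ _ epq) => // Xpq.
by rewrite (connect_trans cxp (connect1 Xpq)) in ncxq.
Qed.

Lemma collapse (T : finType) e V1 V2 N (X : rel T) (P Q : {set T}) q0 : setting e V1 V2 N -> symmetric X ->
  P \subset V1 -> Q \subset V2 -> N <= 2 * #|P| ->
  (forall p q, p \in P -> q \in Q -> e p q -> X p q) -> q0 \in Q -> Q \subset component X q0.
Proof.
move=> hs sX PV QV hP cr q0Q; apply/subsetP => q qQ; rewrite inE.
have [p pP /andP[e1 e2]] :=
  L_common (setting_swap hs) (subsetP QV _ q0Q) (subsetP QV _ qQ) PV hP.
apply: (connect_trans (y:=p)); apply: connect1.
  by rewrite sX; apply: cr => //; rewrite (s_sym hs).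
by apply: cr => //; rewrite (s_sym hs).
Qed.

Lemma collapse2 (T : finType) e V1 V2 N (X : rel T) (P Q : {set T}) q0 : setting e V1 V2 N -> symmetric X ->
  P \subset V1 -> Q \subset V2 -> N <= 2 * #|Q| -> N <= 4 * #|P| ->
  (forall p q, p \in P -> q \in Q -> e p q -> X p q) -> q0 \in Q -> Q \subset component X q0.
Proof.
move=> hs sX PV QV hQ hP cr q0Q.
have nbP : forall q, q \in Q -> exists2 p, p \in P & e q p.
  move=> q qQ; have h := L_nbr (setting_swap hs) (subsetP QV _ qQ) PV.
  have : 0 < #|P :&: nb e q| by lia.
  by case/card_gt0P => p; rewrite !inE => /andP[pP eqp]; exists p.
have cr' : forall q p, q \in Q -> p \in P -> e q p -> X q p.
  by move=> q p qQ pP eqp; rewrite sX; apply: cr => //; rewrite (s_sym hs).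
have [p0 p0P e0] := nbP _ q0Q.
have PC := collapse (setting_swap hs) sX QV PV hQ cr' p0P.
apply/subsetP => q qQ; rewrite inE.
have [p pP ep] := nbP _ qQ.
apply: (connect_trans (y:=p0)); first exact: connect1 (cr' _ _ q0Q p0P e0).
apply: (connect_trans (y:=p)); first by have := subsetP PC _ pP; rewrite inE.
by apply: connect1; rewrite sX; exact: cr' _ _ qQ pP ep.
Qed.

Lemma big_swap (T : finType) (r : rel T) V1 V2 k :
  has_big_component r V2 V1 k -> has_big_component r V1 V2 k.
Proof. by case=> y [h1 h2]; exists y. Qed.

Lemma stepA (T : finType) e V1 V2 m n (R B : rel T) x : 0 < n -> n < m ->
  setting e V1 V2 (m + n - 1) -> symmetric R -> symmetric B ->
  (forall a b, e a b -> R a b || B a b) -> m <= #|component R x :&: V1| ->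
  has_big_component R V1 V2 m \/ has_big_component B V1 V2 n.
Proof.
move=> n0 nm hs sR sB cov hC1.
case: (leqP m #|component R x :&: V2|) => hC2; first by left; exists x.
set C := component R x in hC1 hC2.
set Q := V2 :\: C; set P := C :&: V1.
have hQ : #|Q| + #|C :&: V2| = m + n - 1.
  rewrite /Q cardsD -(s_V2 hs) [V2 :&: C]setIC.
  have := subset_leq_card (subsetIr C V2); lia.
have PV : P \subset V1 by apply: subsetIr.
have QV : Q \subset V2 by apply: subsetDl.
have cr : forall p q, p \in P -> q \in Q -> e p q -> B p q.
  move=> p q; rewrite /P /Q /C !inE => /andP[cp _] /andP[ncq _] epq.
  exact: (cross_edge cov cp ncq epq).
have : 0 < #|Q| by lia.
case/card_gt0P => q0 q0Q.
have hP2 : m + n - 1 <= 2 * #|P| by rewrite /P; lia.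
have QD := collapse hs sB PV QV hP2 cr q0Q.
right; exists q0; split; last first.
  have : Q \subset component B q0 :&: V2 by rewrite subsetI QD QV.
  move/subset_leq_card; lia.
case: (leqP (m + n - 1) (4 * #|Q|)) => hQ4.
  have PD : P \subset component B q0 :&: V1.
    apply/subsetP => p pP; rewrite inE (subsetP PV _ pP) andbT.
    have h := L_nbr hs (subsetP PV _ pP) QV.
    have : 0 < #|Q :&: nb e p| by lia.
    case/card_gt0P => q; rewrite in_setI => /andP[qQ]; rewrite inE => epq.
    have := subsetP QD _ qQ; rewrite inE => cq.
    rewrite inE; apply: (connect_trans cq); apply: connect1; rewrite sB; exact: cr.
  move/subset_leq_card: PD; rewrite /P; lia.
have h := L_nbr (setting_swap hs) (subsetP QV _ q0Q) PV.
have sub : P :&: nb e q0 \subset component B q0 :&: V1.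
  apply/subsetP => p; rewrite in_setI => /andP[pP]; rewrite inE => eqp.
  rewrite in_setI (subsetP PV _ pP) andbT inE; apply: connect1; rewrite sB; apply: cr => //.
  by rewrite (s_sym hs).
move/subset_leq_card: sub; rewrite /P in h *; lia.
Qed.

Lemma stepB (T : finType) e V1 V2 m n (R B : rel T) x : 0 < n -> n < m ->
  setting e V1 V2 (m + n - 1) -> symmetric R -> symmetric B ->
  (forall a b, e a b -> R a b || B a b) -> m + n - 1 <= 2 * #|component B x :&: V1| ->
  has_big_component R V1 V2 m \/ has_big_component B V1 V2 n.
Proof.
move=> n0 nm hs sR sB cov hD1.
case: (leqP n #|component B x :&: V2|) => hD2.
  by right; exists x; split => //; lia.
set D := component B x in hD1 hD2.
set Q := V2 :\: D; set P := D :&: V1.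
have hQ : #|Q| + #|D :&: V2| = m + n - 1.
  rewrite /Q cardsD -(s_V2 hs) [V2 :&: D]setIC.
  have := subset_leq_card (subsetIr D V2); lia.
have PV : P \subset V1 by apply: subsetIr.
have QV : Q \subset V2 by apply: subsetDl.
have cov' : forall a b, e a b -> B a b || R a b by move=> a b /cov; rewrite orbC.
have cr : forall p q, p \in P -> q \in Q -> e p q -> R p q.
  move=> p q; rewrite /P /Q /D !inE => /andP[cp _] /andP[ncq _] epq.
  exact: (cross_edge cov' cp ncq epq).
have : 0 < #|Q| by lia.
case/card_gt0P => q0 q0Q.
have hP2 : m + n - 1 <= 2 * #|P| by rewrite /P; lia.
have QC := collapse hs sR PV QV hP2 cr q0Q.
have : m <= #|component R q0 :&: V2|.
  have : Q \subset component R q0 :&: V2 by rewrite subsetI QC QV.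
  move/subset_leq_card; lia.
move/(stepA n0 nm (setting_swap hs) sR sB cov).
by case=> [/big_swap|/big_swap]; [left|right].
Qed.

Lemma stepC (T : finType) e V1 V2 N (R B : rel T) x : setting e V1 V2 N ->
  (forall a b, e a b -> R a b || B a b) ->
  (forall y, 2 * #|component B y :&: V2| < N) -> x \in V1 ->
  N < 4 * #|component R x :&: V2|.
Proof.
move=> hs cov hB xV.
have sub : nb e x \subset (component R x :&: V2) :|: (component B x :&: V2).
  apply/subsetP => z; rewrite !inE => exz.
  rewrite -(s_bip hs exz) xV !andbT.
  by case/orP: (cov _ _ exz) => h; apply/orP; [left|right]; apply: connect1.
move/subset_leq_card: sub; rewrite cardsU.
have hd := s_deg hs x; rewrite /deg in hd.
have := hB x; lia.
Qed.

Theorem lemma2p1 (m n : nat) (T : finType) (e : rel T) (V1 V2 : {set T})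
  (c : T -> T -> bool) :
  0 < n -> n < m ->
  simple_graph e ->
  bipartite_with e V1 V2 ->
  #|V1| = m + n - 1 -> #|V2| = m + n - 1 ->
  (forall v : T, 3 * (m + n - 1) < 4 * deg e v) ->
  edge_coloring c ->
  has_big_component (red_sub e c) V1 V2 m \/ has_big_component (blue_sub e c) V1 V2 n.
Proof.
move=> n0 nm [se ie] [dis [uni bip]] h1 h2 hdeg ec.
have hs : setting e V1 V2 (m + n - 1) by split.
have hs' := setting_swap hs.
set R := red_sub e c; set B := blue_sub e c.
have sR : symmetric R by move=> x y; rewrite /R /red_sub se ec.
have sB : symmetric B by move=> x y; rewrite /B /blue_sub se ec.
have cov : forall a b, e a b -> R a b || B a b.
  by move=> a b eab; rewrite /R /B /red_sub /blue_sub eab /=; case: (c a b).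
case: (classic (has_big_component R V1 V2 m \/ has_big_component B V1 V2 n)) => // H.
exfalso.
have hA1 : forall x, #|component R x :&: V1| < m.
  move=> x; rewrite ltnNge; apply/negP => hx; apply: H; exact: stepA hs sR sB cov hx.
have hA2 : forall x, #|component R x :&: V2| < m.
  move=> x; rewrite ltnNge; apply/negP => hx; apply: H.
  by case: (stepA n0 nm hs' sR sB cov hx) => /big_swap; [left|right].
have hB1 : forall x, 2 * #|component B x :&: V1| < m + n - 1.
  move=> x; rewrite ltnNge; apply/negP => hx; apply: H; exact: stepB hs sR sB cov hx.
have hB2 : forall x, 2 * #|component B x :&: V2| < m + n - 1.
  move=> x; rewrite ltnNge; apply/negP => hx; apply: H.
  by case: (stepB n0 nm hs' sR sB cov hx) => /big_swap; [left|right].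
have hC : forall x, x \in V1 -> m + n - 1 < 4 * #|component R x :&: V2|.
  by move=> x; apply: stepC hs cov hB2.
have hC' : forall x, x \in V2 -> m + n - 1 < 4 * #|component R x :&: V1|.
  by move=> x; apply: stepC hs' cov hB1.
have hD : forall x, x \in V1 -> m + n - 1 < 2 * #|component R x :&: V2|.
  move=> x xV; rewrite ltnNge; apply/negP => hx.
  have := hC x xV; set C := component R x => hCx.
  have : 0 < #|C :&: V2| by lia.
  case/card_gt0P => y; rewrite in_setI => /andP[cy yV].
  have Ceq : component R y = C.
    apply/setP => z; rewrite /C !inE; move: cy; rewrite inE => cy.
    apply/idP/idP; first exact: connect_trans cy.
    by apply: connect_trans; rewrite (sym_connect_sym sR).
  have hP := hC' y yV; rewrite Ceq in hP.
  set Q := V2 :\: C; set P := C :&: V1.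
  have hQ : #|Q| + #|C :&: V2| = m + n - 1.
    rewrite /Q cardsD h2 [V2 :&: C]setIC.
    have := subset_leq_card (subsetIr C V2); lia.
  have PV : P \subset V1 by apply: subsetIr.
  have QV : Q \subset V2 by apply: subsetDl.
  have cr : forall p q, p \in P -> q \in Q -> e p q -> B p q.
    move=> p q; rewrite /P /Q /C !inE => /andP[cp _] /andP[ncq _] epq.
    exact: (cross_edge cov cp ncq epq).
  rewrite -/C in hx.
  have : 0 < #|Q| by lia.
  case/card_gt0P => q0 q0Q.
  have hQ2 : m + n - 1 <= 2 * #|Q| by lia.
  have hP4 : m + n - 1 <= 4 * #|P| by rewrite /P; lia.
  have QD := collapse2 hs sB PV QV hQ2 hP4 cr q0Q.
  have : Q \subset component B q0 :&: V2 by rewrite subsetI QD QV.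
  move/subset_leq_card; have := hB2 q0; lia.
have : 0 < #|V1| by lia.
case/card_gt0P => x xV.
have : ~~ (V1 \subset component R x).
  apply/negP => sub; have := hA1 x.
  have : V1 \subset component R x :&: V1 by rewrite subsetI sub subxx.
  move/subset_leq_card; lia.
case/subsetPn => x' x'V x'C.
have I0 : (component R x :&: V2) :&: (component R x' :&: V2) = set0.
  case: (set_0Vmem ((component R x :&: V2) :&: (component R x' :&: V2))) => // [[z]].
  rewrite !inE => /andP[/andP[cxz _] /andP[cx'z _]].
  move: x'C; rewrite inE => nx; case/negP: nx.
  by apply: (connect_trans cxz); rewrite (sym_connect_sym sR).
have : (component R x :&: V2) :|: (component R x' :&: V2) \subset V2.
  by rewrite subUset !subsetIr.
move/subset_leq_card; rewrite cardsU I0 cards0 subn0 h2.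
have := hD x xV; have := hD x' x'V; lia.
Qed.
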